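(* Let $\mathcal{M}_1,\mathcal{M}_2$ be transducers over input alphabet $\Sigma$ and output alphabet $\Gamma$, and let $\mathcal{A}_{\mathit{Up}}$ be a deterministic finite automaton recognizing a language $\mathit{Up}\subseteq\Sigma^*$. If $\llbracket\mathcal{M}_1\rrbracket_{|\mathit{Up}}\neq\llbracket\mathcal{M}_2\rrbracket_{|\mathit{Up}}$, then there exists $u\in\mathit{Up}$ with $|u|\leq 2\cdot(|\mathcal{M}_1|\cdot|\mathcal{M}_2|\cdot|\mathcal{A}_{\mathit{Up}}|)^2$ on which $\llbracket\mathcal{M}_1\rrbracket$ and $\llbracket\mathcal{M}_2\rrbracket$ differ, i.e. $u$ lies in exactly one of $\mathrm{dom}(\llbracket\mathcal{M}_1\rrbracket)$, $\mathrm{dom}(\llbracket\mathcal{M}_2\rrbracket)$, or $u$ lies in both and $\llbracket\mathcal{M}_1\rrbracket(u)\neq\llbracket\mathcal{M}_2\rrbracket(u)$.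
   Context: A (subsequential string) transducer is a tuple $\mathcal{M}=(\Sigma,\Gamma,Q,q_0,w_0,\delta,\delta_F)$ with finite input alphabet $\Sigma$, finite output alphabet $\Gamma$, finite state set $Q$, initial state $q_0$, initial production $w_0\in\Gamma^*$, partial transition function $\delta:Q\times\Sigma\to Q\times\Gamma^*$ (write $q\xrightarrow{a|w}q'$ when $\delta(q,a)=(q',w)$) and partial final function $\delta_F:Q\to\Gamma^*$ ($q$ is final if $\delta_F(q)$ is defined). Runs are extended to words: $q\xrightarrow{\varepsilon|\varepsilon}{}^*q$, and if $q\xrightarrow{u|w}{}^*q'$ and $q'\xrightarrow{a|w'}q''$ then $q\xrightarrow{ua|ww'}{}^*q''$. The partial function $\llbracket\mathcal{M}\rrbracket:\Sigma^*\to\Gamma^*$ is $\llbracket\mathcal{M}\rrbracket(u)=w_0\,w\,\delta_F(q)$ if $q_0\xrightarrow{u|w}{}^*q$ with $q$ final, and undefined otherwise; $\mathrm{dom}$ denotes its domain and $\llbracket\mathcal{M}\rrbracket_{|L}$ its restriction to a language $L$ (restrictions are compared as partial functions). $|\mathcal{M}|$ is the number of states of $\mathcal{M}$ and $|\mathcal{A}_{\mathit{Up}}|$ the number of states of $\mathcal{A}_{\mathit{Up}}$. *)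

(* Defs.v *)
From mathcomp Require Import all_boot.
Set Implicit Arguments. Unset Strict Implicit. Unset Printing Implicit Defensive.

Record transducer (Sigma : finType) (Gamma : finType) := Transducer {
  tstate : finType;
  tinit : tstate;
  tinit_out : seq Gamma;
  tdelta : tstate -> Sigma -> option (tstate * seq Gamma);
  tfinal : tstate -> option (seq Gamma)
}.

Fixpoint trun (Sigma : finType) (Gamma : finType) (M : transducer Sigma Gamma)
    (q : tstate M) (u : seq Sigma) : option (tstate M * seq Gamma) :=
  match u with
  | [::] => Some (q, [::])
  | a :: u' =>
      match @tdelta Sigma Gamma M q a with
      | None => None
      | Some (q1, w1) =>
          match @trun Sigma Gamma M q1 u' with
          | None => None
          | Some (q2, w2) => Some (q2, w1 ++ w2)
          end
      end
  end.

Definition tsem (Sigma : finType) (Gamma : finType) (M : transducer Sigma Gamma)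
    (u : seq Sigma) : option (seq Gamma) :=
  match @trun Sigma Gamma M (@tinit Sigma Gamma M) u with
  | None => None
  | Some (q, w) =>
      match @tfinal Sigma Gamma M q with
      | None => None
      | Some wf => Some (@tinit_out Sigma Gamma M ++ w ++ wf)
      end
  end.

Definition trans_size (Sigma : finType) (Gamma : finType) (M : transducer Sigma Gamma) :=
  #|tstate M|.

Record dfa (Sigma : finType) := DFA {
  dstate : finType;
  dinit : dstate;
  ddelta : dstate -> Sigma -> dstate;
  dfinal : pred dstate
}.

Definition daccept (Sigma : finType) (A : dfa Sigma) (u : seq Sigma) : bool :=
  @dfinal Sigma A (foldl (@ddelta Sigma A) (@dinit Sigma A) u).

Definition dfa_size (Sigma : finType) (A : dfa Sigma) := #|dstate A|.

Definition restrict (Sigma : finType) (Gamma : finType)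
    (f : seq Sigma -> option (seq Gamma)) (L : pred (seq Sigma)) :
    seq Sigma -> option (seq Gamma) :=
  fun u => if L u then f u else None.

(* Main.v *)
Require Import Defs.
From mathcomp Require Import all_boot zify.
From Stdlib Require Classical_Prop FunctionalExtensionality.
Set Implicit Arguments. Unset Strict Implicit. Unset Printing Implicit Defensive.

Lemma catL (T : eqType) (s a b : seq T) : s ++ a = s ++ b -> a = b.
Proof. by move/eqP; rewrite eqseq_cat // => /andP[_ /eqP]. Qed.

Lemma catR (T : eqType) (s a b : seq T) : a ++ s = b ++ s -> a = b.
Proof.
move=> e; have sz : size a = size b by move/(congr1 size): e; rewrite !size_cat; lia.
by move/eqP: e; rewrite eqseq_cat // => /andP[/eqP].
Qed.

Lemma prefixP (T : eqType) (a p a' p' : seq T) :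
  a ++ p = a' ++ p' -> size a' <= size a -> exists t, a = a' ++ t.
Proof.
move=> e hs; exists (drop (size a') a).
have : take (size a') (a ++ p) = take (size a') (a' ++ p') by rewrite e.
rewrite takel_cat // take_size_cat // => ea.
by rewrite -{1}(cat_take_drop (size a') a) ea.
Qed.

Lemma wordL (T : eqType) (a1 b1 P1 X1 a2 b2 P2 X2 : seq T) :
  a1 ++ P1 = a2 ++ P2 -> a1 ++ b1 ++ P1 = a2 ++ b2 ++ P2 ->
  a1 ++ X1 = a2 ++ X2 -> a1 ++ b1 ++ X1 = a2 ++ b2 ++ X2.
Proof.
wlog hs : a1 b1 P1 X1 a2 b2 P2 X2 / size a2 <= size a1.
  move=> H; case: (leqP (size a2) (size a1)) => [|/ltnW] h; first exact: H.
  move=> e1 e2 e3; symmetry; apply: (H a2 b2 P2 X2 a1 b1 P1 X1 h); by symmetry.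
move=> e1 e2 e3; have [t ea] := prefixP e1 hs; subst a1.
rewrite -!catA in e1 e2 e3 *.
move/catL: e1 => e1; move/catL: e2 => e2; move/catL: e3 => e3.
have tb : t ++ b1 = b2 ++ t.
  apply: (@catR _ P1); rewrite -!catA e2 -e1 //.
by rewrite -e3 (catA t) tb -catA.
Qed.

Lemma pigeon (T : finType) (f : nat -> T) s :
  exists i j, [/\ s <= i, i < j, j <= s + #|T| & f i = f j].
Proof.
pose g := fun k : 'I_#|T|.+1 => f (s + k).
have : ~~ injectiveb g.
  apply/negP => /injectiveP /leq_card; rewrite card_ord; lia.
case/injectivePn => k [l] ne e.
case: (ltngtP k l) => h.
- exists (s + k), (s + l); split => //; [lia | lia | have := ltn_ord l; lia].
- exists (s + l), (s + k); split => //; [lia | lia | have := ltn_ord k; lia].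
- by move/val_inj: h ne => ->; rewrite eqxx.
Qed.

Lemma take_split (T : Type) (u : seq T) i j :
  i <= j -> take j u = take i u ++ take (j - i) (drop i u).
Proof. by move=> h; rewrite -{1}(subnKC h) takeD. Qed.

Lemma card_pos (T : finType) (x : T) : 0 < #|T|.
Proof. by apply/card_gt0P; exists x. Qed.

Definition ost (Sigma Gamma : finType) (M : transducer Sigma Gamma) (q : tstate M)
  (v : seq Sigma) : option (tstate M) := omap fst (trun q v).

Lemma trun_cat (Sigma Gamma : finType) (M : transducer Sigma Gamma) q x y :
  trun q (x ++ y) = match trun q x with None => None
    | Some (p, o) => omap (fun r => (r.1, o ++ r.2)) (@trun _ _ M p y) end.
Proof.
elim: x q => [|a x IH] q /=.
  by case: trun => [[p o]|].
case: tdelta => [[q1 w1]|] //; rewrite IH.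
case: (trun q1 x) => [[p o]|] //=.
by case: (trun p y) => [[p' o']|] //=; rewrite catA.
Qed.

Lemma trun_catS (Sigma Gamma : finType) (M : transducer Sigma Gamma) q x y p o :
  trun q x = Some (p, o) ->
  trun q (x ++ y) = omap (fun r => (r.1, o ++ r.2)) (@trun _ _ M p y).
Proof. by move=> h; rewrite trun_cat h. Qed.

Lemma trun_alive (Sigma Gamma : finType) (M : transducer Sigma Gamma) q x y :
  @trun _ _ M q (x ++ y) <> None ->
  exists p o, trun q x = Some (p, o) /\ trun p y <> None.
Proof.
rewrite trun_cat; case: trun => [[p o]|] // h; exists p, o; split => //.
by move: h; case: trun.
Qed.

Lemma ost_cat (Sigma Gamma : finType) (M : transducer Sigma Gamma) q x y :
  @ost _ _ M q (x ++ y) = obind (fun p => ost p y) (ost q x).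
Proof.
rewrite /ost trun_cat; case: trun => [[p o]|] //=.
by case: trun => [[p' o']|].
Qed.

Lemma ost_loop (Sigma Gamma : finType) (M : transducer Sigma Gamma) q x y w :
  @ost _ _ M q x = ost q (x ++ y) -> ost q (x ++ w) = ost q (x ++ y ++ w).
Proof. by move=> e; rewrite catA (ost_cat _ (x ++ y)) -e ost_cat. Qed.

Lemma ost_none (Sigma Gamma : finType) (M : transducer Sigma Gamma) q v :
  (@ost _ _ M q v = None) <-> (trun q v = None).
Proof. by rewrite /ost; case: trun. Qed.

Lemma ost_prefix (Sigma Gamma : finType) (M : transducer Sigma Gamma) q x y :
  @ost _ _ M q (x ++ y) <> None -> ost q x <> None.
Proof. by rewrite ost_cat; case: ost. Qed.

Lemma tsem_none (Sigma Gamma : finType) (M : transducer Sigma Gamma) v v' :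
  ost (tinit M) v = ost (tinit M) v' -> (tsem M v == None) = (tsem M v' == None).
Proof.
rewrite /tsem /ost; case: (trun _ v) => [[q w]|]; case: (trun _ v') => [[q' w']|] //=.
all: try (by case => ->; case: tfinal).
Qed.

Lemma odflt_eq (T : Type) (d : T) a b :
  a <> None -> b <> None -> odflt d a = odflt d b -> a = b.
Proof. by case: a => // x; case: b => // y _ _ /= ->. Qed.

Lemma tsem_trun (Sigma Gamma : finType) (M : transducer Sigma Gamma) v :
  tsem M v <> None -> trun (tinit M) v <> None.
Proof. by rewrite /tsem; case: trun. Qed.

Lemma case2 (Sigma Gamma : finType) (M1 M2 : transducer Sigma Gamma) (A : dfa Sigma)
  x y w :
  trun (tinit M1) (x ++ y ++ w) = None ->
  trun (tinit M2) (x ++ y ++ w) <> None ->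
  ost (tinit M1) x = ost (tinit M1) (x ++ y) ->
  odflt (tinit M2) (ost (tinit M2) x) = odflt (tinit M2) (ost (tinit M2) (x ++ y)) ->
  foldl (@ddelta _ A) (dinit A) (x ++ y) = foldl (@ddelta _ A) (dinit A) x ->
  [/\ trun (tinit M1) (x ++ w) = None,
      ost (tinit M2) (x ++ w) = ost (tinit M2) (x ++ y ++ w)
    & daccept A (x ++ w) = daccept A (x ++ y ++ w)].
Proof.
move=> h1 h2 e1 e2 eA; split.
- by apply/ost_none; rewrite (ost_loop _ e1); apply/ost_none.
- apply: ost_loop; apply: odflt_eq e2.
    move=> hx; apply: h2; apply/ost_none; rewrite ost_cat hx //.
  move=> hx; apply: h2; apply/ost_none; rewrite catA ost_cat hx //.
- by rewrite /daccept !foldl_cat in eA *; rewrite eA.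
Qed.

Lemma decomp (Sigma Gamma : finType) (M : transducer Sigma Gamma) x y m z w :
  trun (tinit M) (x ++ y ++ m ++ z ++ w) <> None ->
  odflt (tinit M) (ost (tinit M) x) = odflt (tinit M) (ost (tinit M) (x ++ y)) ->
  odflt (tinit M) (ost (tinit M) (x ++ y ++ m)) =
    odflt (tinit M) (ost (tinit M) (x ++ y ++ m ++ z)) ->
  exists a b c d e (fo : option (seq Gamma)),
  [/\ tsem M (x ++ y ++ m ++ z ++ w) = omap (fun f => a ++ b ++ c ++ d ++ e ++ f) fo,
      tsem M (x ++ m ++ z ++ w) = omap (fun f => a ++ c ++ d ++ e ++ f) fo,
      tsem M (x ++ y ++ m ++ w) = omap (fun f => a ++ b ++ c ++ e ++ f) fo
    & tsem M (x ++ m ++ w) = omap (fun f => a ++ c ++ e ++ f) fo].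
Proof.
move=> hu E1 E2.
have [p [ox [Hx H1]]] := trun_alive hu.
have [p1 [oy [Hy H2]]] := trun_alive H1.
have [p2 [om [Hm H3]]] := trun_alive H2.
have [p3 [oz [Hz H4]]] := trun_alive H3.
case Hw: (trun p3 w) H4 => [[pe ow]|] // _.
move: E1; rewrite /ost (trun_catS _ Hx) Hy /= Hx /= => E1; subst p1.
move: E2; rewrite /ost !(trun_catS _ Hx) /= (trun_catS _ Hy) Hm /=
  (trun_catS _ Hy) /= (trun_catS _ Hm) Hz /= => E2; subst p3.
exists (tinit_out M ++ ox), oy, om, oz, ow, (tfinal pe).
rewrite /tsem; split.
- rewrite (trun_catS _ Hx) (trun_catS _ Hy) (trun_catS _ Hm) (trun_catS _ Hz) Hw /=.
  by case: tfinal => //= f; rewrite !catA.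
- rewrite (trun_catS _ Hx) (trun_catS _ Hm) (trun_catS _ Hz) Hw /=.
  by case: tfinal => //= f; rewrite !catA.
- rewrite (trun_catS _ Hx) (trun_catS _ Hy) (trun_catS _ Hm) Hw /=.
  by case: tfinal => //= f; rewrite !catA.
- rewrite (trun_catS _ Hx) (trun_catS _ Hm) Hw /=.
  by case: tfinal => //= f; rewrite !catA.
Qed.

Lemma combine (G : eqType) (a1 b1 c1 d1 e1 a2 b2 c2 d2 e2 : seq G) fo1 fo2 :
  omap (fun f => a1 ++ c1 ++ e1 ++ f) fo1 = omap (fun f => a2 ++ c2 ++ e2 ++ f) fo2 ->
  omap (fun f => a1 ++ b1 ++ c1 ++ e1 ++ f) fo1 =
    omap (fun f => a2 ++ b2 ++ c2 ++ e2 ++ f) fo2 ->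
  omap (fun f => a1 ++ c1 ++ d1 ++ e1 ++ f) fo1 =
    omap (fun f => a2 ++ c2 ++ d2 ++ e2 ++ f) fo2 ->
  omap (fun f => a1 ++ b1 ++ c1 ++ d1 ++ e1 ++ f) fo1 =
    omap (fun f => a2 ++ b2 ++ c2 ++ d2 ++ e2 ++ f) fo2.
Proof.
case: fo1 => [f1|]; case: fo2 => [f2|] //= [e3] [e2'] [e1'].
by congr Some; apply: (wordL (P1 := c1 ++ e1 ++ f1) (P2 := c2 ++ e2 ++ f2)).
Qed.

Lemma case1 (Sigma Gamma : finType) (M1 M2 : transducer Sigma Gamma) (A : dfa Sigma)
  x y m z w :
  daccept A (x ++ y ++ m ++ z ++ w) ->
  tsem M1 (x ++ y ++ m ++ z ++ w) <> tsem M2 (x ++ y ++ m ++ z ++ w) ->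
  trun (tinit M1) (x ++ y ++ m ++ z ++ w) <> None ->
  trun (tinit M2) (x ++ y ++ m ++ z ++ w) <> None ->
  odflt (tinit M1) (ost (tinit M1) x) = odflt (tinit M1) (ost (tinit M1) (x ++ y)) ->
  odflt (tinit M1) (ost (tinit M1) (x ++ y ++ m)) =
    odflt (tinit M1) (ost (tinit M1) (x ++ y ++ m ++ z)) ->
  odflt (tinit M2) (ost (tinit M2) x) = odflt (tinit M2) (ost (tinit M2) (x ++ y)) ->
  odflt (tinit M2) (ost (tinit M2) (x ++ y ++ m)) =
    odflt (tinit M2) (ost (tinit M2) (x ++ y ++ m ++ z)) ->
  foldl (@ddelta _ A) (dinit A) x = foldl (@ddelta _ A) (dinit A) (x ++ y) ->
  foldl (@ddelta _ A) (dinit A) (x ++ y ++ m) =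
    foldl (@ddelta _ A) (dinit A) (x ++ y ++ m ++ z) ->
  exists v, [/\ daccept A v, tsem M1 v <> tsem M2 v &
     v \in [:: x ++ m ++ z ++ w; x ++ y ++ m ++ w; x ++ m ++ w]].
Proof.
move=> hacc hw h1 h2 e11 e12 e21 e22 eA1 eA2.
have [a1 [b1 [c1 [d1 [f1 [fo1 [t1 t2 t3 t4]]]]]]] := decomp h1 e11 e12.
have [a2 [b2 [c2 [d2 [f2 [fo2 [s1 s2 s3 s4]]]]]]] := decomp h2 e21 e22.
rewrite /daccept !foldl_cat in hacc eA1 eA2 *.
rewrite -eA1 in eA2 hacc. rewrite -eA2 in hacc.
case: (tsem M1 (x ++ m ++ z ++ w) =P tsem M2 (x ++ m ++ z ++ w)) => [q1|n1]; last first.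
  exists (x ++ m ++ z ++ w); split => //; last by rewrite inE eqxx.
  by rewrite /daccept !foldl_cat -eA2.
case: (tsem M1 (x ++ y ++ m ++ w) =P tsem M2 (x ++ y ++ m ++ w)) => [q2|n2]; last first.
  exists (x ++ y ++ m ++ w); split => //; last by rewrite !inE eqxx orbT.
  by rewrite /daccept !foldl_cat -eA1.
case: (tsem M1 (x ++ m ++ w) =P tsem M2 (x ++ m ++ w)) => [q3|n3]; last first.
  exists (x ++ m ++ w); split => //; last by rewrite !inE eqxx !orbT.
  by rewrite /daccept !foldl_cat.
exfalso; apply: hw; rewrite t1 s1.
rewrite t2 s2 in q1; rewrite t3 s3 in q2; rewrite t4 s4 in q3.
exact: combine.
Qed.

Lemma shorten1 (Sigma Gamma : finType) (M1 M2 : transducer Sigma Gamma) (A : dfa Sigma) u :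
  daccept A u -> tsem M1 u <> tsem M2 u ->
  trun (tinit M1) u <> None -> trun (tinit M2) u <> None ->
  2 * (trans_size M1 * trans_size M2 * dfa_size A) <= size u ->
  exists v, [/\ daccept A v, tsem M1 v <> tsem M2 v & size v < size u].
Proof.
move=> hacc hw h1 h2 hsz.
pose f k := (odflt (tinit M1) (ost (tinit M1) (take k u)),
             odflt (tinit M2) (ost (tinit M2) (take k u)),
             foldl (@ddelta _ A) (dinit A) (take k u)).
have [i [j [_ ij jN e]]] := pigeon f 0.
have [i' [j' [ji' ij' jN' e']]] := pigeon f j.
rewrite !card_prod -/(trans_size M1) -/(trans_size M2) -/(dfa_size A) in jN jN'.
set N := trans_size M1 * trans_size M2 * dfa_size A in hsz jN jN'.
pose x := take i u; pose y := take (j - i) (drop i u);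
pose m := take (i' - j) (drop j u); pose z := take (j' - i') (drop i' u);
pose w := drop j' u.
have tj : take j u = x ++ y by exact: take_split (ltnW ij).
have ti' : take i' u = x ++ y ++ m by rewrite (take_split u ji') tj -catA.
have tj' : take j' u = x ++ y ++ m ++ z by rewrite (take_split u (ltnW ij')) ti' -!catA.
have hu : u = x ++ y ++ m ++ z ++ w by rewrite -{1}(cat_take_drop j' u) tj' -!catA.
have sy : size y = j - i by rewrite size_takel // size_drop; lia.
have sz : size z = j' - i' by rewrite size_takel // size_drop; lia.
rewrite /f /= tj in e; rewrite /f /= ti' tj' in e'.
case: e => e11 e21 eA1; case: e' => e12 e22 eA2.
rewrite hu in hacc hw h1 h2.
have [v [va vw vin]] := case1 hacc hw h1 h2 e11 e12 e21 e22 eA1 eA2.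
exists v; split => //.
have -> : size u = size (x ++ y ++ m ++ z ++ w) by rewrite -hu.
move: vin; rewrite !inE !size_cat => /or3P [] /eqP -> ; rewrite !size_cat; lia.
Qed.

Lemma shorten2 (Sigma Gamma : finType) (M1 M2 : transducer Sigma Gamma) (A : dfa Sigma) u :
  daccept A u -> trun (tinit M1) u = None -> tsem M2 u <> None ->
  2 * (trans_size M1 * trans_size M2 * dfa_size A) <= size u ->
  exists v, [/\ daccept A v, trun (tinit M1) v = None, tsem M2 v <> None & size v < size u].
Proof.
move=> hacc h1 h2 hsz.
pose f k := (ost (tinit M1) (take k u),
             odflt (tinit M2) (ost (tinit M2) (take k u)),
             foldl (@ddelta _ A) (dinit A) (take k u)).
have [i [j [_ ij jN e]]] := pigeon f 0.
rewrite !card_prod card_option -/(trans_size M1) -/(trans_size M2) -/(dfa_size A) in jN.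
have p1 : 0 < trans_size M1 := card_pos (tinit M1).
have p2 : 0 < trans_size M2 := card_pos (tinit M2).
have p3 : 0 < dfa_size A := card_pos (dinit A).
set n1 := trans_size M1 in p1 jN hsz; set n2 := trans_size M2 in p2 jN hsz;
set n3 := dfa_size A in p3 jN hsz.
have jsz : j <= size u.
  apply: (leq_trans jN); apply: leq_trans hsz; rewrite add0n.
  by rewrite mulnA leq_mul2r mulnA leq_mul2r; apply/orP; right; apply/orP; right; lia.
pose x := take i u; pose y := take (j - i) (drop i u); pose w := drop j u.
have tj : take j u = x ++ y by exact: take_split (ltnW ij).
have hu : u = x ++ y ++ w by rewrite -{1}(cat_take_drop j u) tj -!catA.
have sy : size y = j - i by rewrite size_takel // size_drop; lia.
rewrite /f /= tj in e; case: e => e1 e2 eA.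
have h2' := tsem_trun h2.
rewrite hu in hacc h1 h2 h2'.
have [r1 r2 r3] := case2 h1 h2' e1 e2 (esym eA).
exists (x ++ w); split => //.
- by rewrite r3.
- by move/eqP; rewrite (tsem_none r2) => /eqP.
- have -> : size u = size (x ++ y ++ w) by rewrite -hu.
  rewrite !size_cat; lia.
Qed.

Lemma shorten (Sigma Gamma : finType) (M1 M2 : transducer Sigma Gamma) (A : dfa Sigma) u :
  daccept A u -> tsem M1 u <> tsem M2 u ->
  2 * (trans_size M1 * trans_size M2 * dfa_size A) <= size u ->
  exists v, [/\ daccept A v, tsem M1 v <> tsem M2 v & size v < size u].
Proof.
move=> hacc hw hsz.
have tn : forall (M : transducer Sigma Gamma) v, trun (tinit M) v = None -> tsem M v = None.
  by move=> M v; rewrite /tsem => ->.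
case E1: (trun (tinit M1) u) => [r1|]; case E2: (trun (tinit M2) u) => [r2|].
- by apply: shorten1; rewrite ?E1 ?E2.
- have h1 : tsem M1 u <> None by move=> h; apply: hw; rewrite h tn.
  have hsz' : 2 * (trans_size M2 * trans_size M1 * dfa_size A) <= size u.
    by rewrite (mulnC (trans_size M2)).
  have [v [va v1 v2 vs]] := shorten2 hacc E2 h1 hsz'.
  by exists v; split => //; rewrite (tn _ _ v1).
- have h2 : tsem M2 u <> None by move=> h; apply: hw; rewrite h tn.
  have [v [va v1 v2 vs]] := shorten2 hacc E1 h2 hsz.
  by exists v; split => //; rewrite (tn _ _ v1) => /esym.
- by exfalso; apply: hw; rewrite !tn.
Qed.

Theorem mainTheorem7 (Sigma : finType) (Gamma : finType)
    (M1 M2 : transducer Sigma Gamma) (AUp : dfa Sigma) :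
  restrict (@tsem _ _ M1) (daccept AUp) <> restrict (@tsem _ _ M2) (daccept AUp) ->
  exists u : seq Sigma,
    [/\ daccept AUp u,
        size u <= 2 * (trans_size M1 * trans_size M2 * dfa_size AUp) ^ 2
      & tsem M1 u <> tsem M2 u].
Proof.
move=> hne.
have [u0 [a0 w0]] : exists u, daccept AUp u /\ tsem M1 u <> tsem M2 u.
  apply: Classical_Prop.NNPP => hn; apply: hne; apply: FunctionalExtensionality.functional_extensionality => u.
  rewrite /restrict; case ha: (daccept AUp u) => //.
  by apply: Classical_Prop.NNPP => hd; apply: hn; exists u; split.
set B := (2 * (_ * _ * _) ^ 2).
have hB : 2 * (trans_size M1 * trans_size M2 * dfa_size AUp) <= B.
  rewrite /B leq_mul2l; apply/orP; right; rewrite expnS expn1; nia.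
suff : forall n u, size u <= n -> daccept AUp u -> tsem M1 u <> tsem M2 u ->
  exists v, [/\ daccept AUp v, size v <= B & tsem M1 v <> tsem M2 v].
  by move/(_ (size u0) u0 (leqnn _) a0 w0).
elim => [|n IH] u hs ha hw.
  by exists u; split => //; move: hs; rewrite leqn0 => /eqP ->.
case: (leqP (size u) B) => hb; first by exists u.
have [v [va vw vs]] := shorten ha hw (leq_trans hB (ltnW hb)).
by apply: (IH v) => //; lia.
Qed.
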